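(* For positive integers $n$ and $q \ge 2$ define $$A_{n,q} = \{(x_1,\dots,x_n) \in \mathbb{Z}^n \mid x_1 + \cdots + x_n \le 1.32\,n,\ 0 \le x_i \le q-1 \text{ for } 1 \le i \le n\}$$ and $$B_n = \{(x_1,\dots,x_n) \in \mathbb{Z}^n \mid |\{ i : x_i = 0\}| \ge 0.5657\, n\}.$$ Then there is a constant $c > 1$ such that $$\frac{|A_{n,q} \cap B_n|}{|A_{n,q}|} < c^{-n}$$ for all sufficiently large $n$. *)

(* Defs.v *)
From mathcomp Require Import all_boot.
From Stdlib Require Import Reals.

Set Implicit Arguments.
Unset Strict Implicit.
Unset Printing Implicit Defensive.

(* A vector (x_1,...,x_n) in Z^n with 0 <= x_i <= q-1 is represented as a
   finite function 'I_n -> 'I_q (bijective correspondence). *)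
Definition vec (n q : nat) := {ffun 'I_n -> 'I_q}.

Definition vsum n q (x : vec n q) : nat := \sum_(i < n) (x i : nat).

Definition nzeros n q (x : vec n q) : nat := #|[set i : 'I_n | (x i : nat) == 0]|.

Definition A_set (n q : nat) : {set vec n q} :=
  [set x : vec n q | 100 * vsum x <= 132 * n].

Definition AB_set (n q : nat) : {set vec n q} :=
  [set x in A_set n q | 5657 * n <= 10000 * nzeros x].

(* Main.v *)
Require Import Defs.
From mathcomp Require Import all_boot.
From Stdlib Require Import Reals.
Open Scope R_scope.
From mathcomp Require Import all_boot all_order all_algebra zify.
From mathcomp Require Import Rstruct.
From Stdlib Require Import ZArith Lia QArith Qreals.
Close Scope Q_scope.
Set Implicit Arguments. Unset Strict Implicit. Unset Printing Implicit Defensive.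
Import Order.TTheory GRing.Theory Num.Theory.
Close Scope R_scope.


Definition Aset n q S : {set vec n q} := [set x : vec n q | vsum x <= S].

Lemma A_setE n q : A_set n q = Aset n q (132 * n %/ 100).
Proof. by apply/setP => x; rewrite !inE leq_divRL // mulnC. Qed.

Lemma AsetS n q S S' : S <= S' -> #|Aset n q S| <= #|Aset n q S'|.
Proof.
move=> h; apply: subset_leq_card; apply/subsetP => x; rewrite !inE => hx.
exact: leq_trans hx h.
Qed.

Lemma card_inj_le (T U : finType) (f : T -> U) (A : {set T}) (B : {set U}) :
  injective f -> (forall x, x \in A -> f x \in B) -> #|A| <= #|B|.
Proof.
move=> fi fAB; rewrite -(card_imset A fi); apply: subset_leq_card.
by apply/subsetP => y /imsetP [x xA ->]; apply: fAB.
Qed.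

Definition vcat n1 n2 q (y : vec n1 q) (z : vec n2 q) : vec (n1 + n2) q :=
  [ffun i => match fintype.split i with inl a => y a | inr b => z b end].

Lemma vsum_cat n1 n2 q (y : vec n1 q) (z : vec n2 q) :
  vsum (vcat y z) = vsum y + vsum z.
Proof.
rewrite /vsum big_split_ord /=; congr (_ + _); apply: eq_bigr => i _;
  rewrite ffunE.
- by rewrite (unsplitK (inl _ i)).
- by rewrite (unsplitK (inr _ i)).
Qed.

Lemma Aset_cat n1 n2 q S1 S2 :
  #|Aset n1 q S1| * #|Aset n2 q S2| <= #|Aset (n1 + n2) q (S1 + S2)|.
Proof.
rewrite -cardsX.
apply: (@card_inj_le _ _ (fun p => vcat p.1 p.2)).
- move=> [y z] [y' z'] /= E; congr pair; apply/ffunP => a.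
  + have := congr1 (fun f : vec _ _ => f (lshift n2 a)) E.
    by rewrite /= !ffunE (unsplitK (inl _ a)).
  + have := congr1 (fun f : vec _ _ => f (rshift n1 a)) E.
    by rewrite /= !ffunE (unsplitK (inr _ a)).
- move=> [y z]; rewrite !inE /= vsum_cat => /andP [h1 h2]; exact: leq_add.
Qed.

Lemma Aset_gt0 n q S : 0 < q -> 0 < #|Aset n q S|.
Proof.
move=> q0; apply/card_gt0P; exists [ffun _ => Ordinal q0].
by rewrite inE /vsum big1 // => i _; rewrite ffunE.
Qed.

Lemma Aset_widen n Q q S : Q <= q -> #|Aset n Q S| <= #|Aset n q S|.
Proof.
move=> hQ.
apply: (@card_inj_le _ _ (fun x : vec n Q => [ffun i => widen_ord hQ (x i)] : vec n q)).
- move=> x y E; apply/ffunP => i.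
  have := congr1 (fun f : vec _ _ => nat_of_ord (f i)) E; rewrite /= !ffunE /=.
  exact: val_inj.
- move=> x; rewrite !inE /vsum.
  by move=> h; rewrite (eq_bigr (fun i => nat_of_ord (x i))) // => i _; rewrite ffunE.
Qed.

Lemma Aset_blocks m q S k r : 0 < q ->
  expn #|Aset m q S| k <= #|Aset (k * m + r) q (k * S)|.
Proof.
move=> q0; elim: k => [|k IH].
- by rewrite expn0 mul0n add0n; apply: Aset_gt0.
- rewrite expnS mulSn mulSn -addnA.
  apply: leq_trans (Aset_cat _ _ _ _ _); exact: leq_mul.
Qed.

Lemma A_blocks m q k r : 0 < q ->
  expn #|A_set m q| k <= #|A_set (k * m + r) q|.
Proof.
move=> q0; rewrite !A_setE; apply: leq_trans (Aset_blocks _ _ _ r q0) _.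
apply: AsetS; rewrite leq_divRL //.
have h := leq_trunc_div (132 * m) 100.
have h2 : k * (132 * m %/ 100 * 100) <= k * (132 * m) by rewrite leq_mul2l h orbT.
lia.
Qed.

Lemma card_sum n q S : #|Aset n q S| = \sum_(x : vec n q) (vsum x <= S).
Proof.
rewrite -sum1_card big_mkcond; apply: eq_bigr => x _; rewrite inE.
by case: (vsum x <= S).
Qed.

Definition vcons n q (p : 'I_q * vec n q) : vec n.+1 q :=
  [ffun i => if unlift ord0 i is Some j then p.2 j else p.1].
Definition vuncons n q (x : vec n.+1 q) : 'I_q * vec n q :=
  (x ord0, [ffun j => x (lift ord0 j)]).

Lemma vconsK n q : cancel (@vcons n q) (@vuncons n q).
Proof.
move=> [k y]; rewrite /vuncons /vcons ffunE unlift_none; congr pair.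
by apply/ffunP => j; rewrite !ffunE liftK.
Qed.

Lemma vunconsK n q : cancel (@vuncons n q) (@vcons n q).
Proof.
move=> x; apply/ffunP => i; rewrite /vcons /vuncons ffunE.
by case: unliftP => [j ->|->] //=; rewrite ffunE.
Qed.

Lemma vsum_cons n q p : vsum (@vcons n q p) = p.1 + vsum p.2.
Proof.
rewrite /vsum big_ord_recl /vcons ffunE unlift_none; congr (_ + _).
by apply: eq_bigr => j _; rewrite ffunE liftK.
Qed.

Lemma Aset_rec n q S :
  #|Aset n.+1 q S| = \sum_(k < q | k <= S) #|Aset n q (S - k)|.
Proof.
rewrite card_sum (reindex (@vcons n q)); last first.
  by apply: onW_bij; exists (@vuncons n q); [apply: vconsK | apply: vunconsK].
rewrite -(pair_bigA _ (fun k y => (vsum (vcons (k, y)) <= S) : nat)) /=.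
rewrite [RHS]big_mkcond /=; apply: eq_bigr => k _.
case: leqP => hk.
- rewrite card_sum; apply: eq_bigr => y _; rewrite vsum_cons /=.
  have -> : (k + vsum y <= S) = (vsum y <= S - k) by apply/idP/idP; lia.
  by [].
- rewrite big1 // => y _; rewrite vsum_cons /=.
  have -> : (k + vsum y <= S) = false by apply/negbTE; lia.
  by [].
Qed.

Lemma Aset0 q S : #|Aset 0 q S| = 1.
Proof.
rewrite card_sum (eq_bigr (fun _ => 1)); last by move=> x _; rewrite /vsum big_ord0.
by rewrite sum1_card card_ffun !card_ord.
Qed.


Fixpoint zsum (f : nat -> Z) (k : nat) : Z :=
  match k with 0 => 0%Z | k'.+1 => (zsum f k' + f k')%Z end.
Definition zstep q (l : seq Z) (s : nat) : Z :=
  zsum (fun k => if k <= s then nth 0%Z l (s - k) else 0%Z) q.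
Fixpoint Zlev q S0 m : seq Z :=
  match m with
  | 0 => nseq S0.+1 1%Z
  | m'.+1 => map (zstep q (Zlev q S0 m')) (iota 0 S0.+1)
  end.

Lemma zsum_ok (g : nat -> nat) (l : seq Z) s j :
  (forall k, k <= s -> nth 0%Z l (s - k) = Z.of_nat (g k)) ->
  zsum (fun k => if k <= s then nth 0%Z l (s - k) else 0%Z) j =
  Z.of_nat (\sum_(k < j | k <= s) g k).
Proof.
move=> hg; elim: j => [|j IH]; first by rewrite big_ord0.
rewrite /= IH [X in _ = Z.of_nat X]big_mkcond big_ord_recr /= -big_mkcond /= Nat2Z.inj_add.
by case: leqP => hj //=; rewrite hg.
Qed.

Lemma Zlev_ok q S0 m s : s <= S0 ->
  nth 0%Z (Zlev q S0 m) s = Z.of_nat #|Aset m q s|.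
Proof.
elim: m s => [|m IH] s hs.
  by rewrite /Zlev nth_nseq ltnS hs Aset0.
rewrite -[Zlev _ _ m.+1]/(map (zstep q (Zlev q S0 m)) (iota 0 S0.+1)) (nth_map 0) ?size_iota ?ltnS // nth_iota ?ltnS // add0n.
rewrite Aset_rec /zstep. apply: (@zsum_ok (fun k => #|Aset m q (s - k)|)) => k hk.
apply: IH; exact: leq_trans (leq_subr _ _) hs.
Qed.

Lemma A_set_Z m q :
  Z.of_nat #|A_set m q| = nth 0%Z (Zlev q (132 * m %/ 100) m) (132 * m %/ 100).
Proof. by rewrite A_setE Zlev_ok. Qed.


Lemma l1 (n z : nat) : 5657 * n <= 10000 * z -> 14 * n <= 25 * z.
Proof. move=> h0; have h := proj1 (Nat2Z.inj_le _ _) (@ssrnat.leP _ _ h0); rewrite !Nat2Z.inj_mul in h; apply/ssrnat.leP; apply (proj2 (Nat2Z.inj_le _ _)); rewrite !Nat2Z.inj_mul.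
change (Z.of_nat 5657) with 5657%Z in h. change (Z.of_nat 10000) with 10000%Z in h.
change (Z.of_nat 14) with 14%Z. change (Z.of_nat 25) with 25%Z. lia. Qed.
Lemma l2 (n s : nat) : 100 * s <= 132 * n -> 25 * s <= 33 * n.
Proof. lia. Qed.

Lemma nzerosE n q (x : vec n q) : nzeros x = (\sum_(i < n) ((x i : nat) == 0%N))%N.
Proof.
rewrite /nzeros -sum1_card big_mkcond /=; apply: eq_bigr => i _; rewrite inE.
by case: (_ == _).
Qed.

Local Open Scope ring_scope.

Definition wt (t u : R) (k : nat) : R := GRing.mul (u ^+ (25 * (k == O))) (t ^+ (25 * k)).

Lemma prod_wt n q t u (x : vec n q) :
  \prod_(i < n) wt t u (x i) = u ^+ (25 * nzeros x) * t ^+ (25 * vsum x).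
Proof.
rewrite big_split /= !prodrXr nzerosE /vsum !big_distrr /=.
by [].
Qed.

Lemma chernoff n q (t u : R) : 0 <= t -> t <= 1 -> 1 <= u ->
  #|AB_set n q|%:R * (t ^+ 33 * u ^+ 14) ^+ n <= (\sum_(k < q) wt t u k) ^+ n.
Proof.
move=> t0 t1 u1.
have u0 : 0 <= u by apply: le_trans u1.
rewrite mulr_natl -sumr_const.
apply: (@le_trans _ _ (\sum_(x in AB_set n q) \prod_(i < n) wt t u (x i))).
  apply: ler_sum => x; rewrite !inE => /andP [hA hB].
  rewrite prod_wt exprMn -!exprM mulrC.
  apply: ler_pM; rewrite ?exprn_ge0 //.
  + apply: ler_weXn2l => //.
    exact: l1.
  + apply: ler_wiXn2l => //.
    exact: l2.
have wt0 : forall k, 0 <= wt t u k by move=> k; rewrite /wt mulr_ge0 ?exprn_ge0.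
apply: (@le_trans _ _ (\sum_(x : vec n q) \prod_(i < n) wt t u (x i))).
  rewrite [X in _ <= X](big_mkcond predT) [X in X <= _]big_mkcond /=.
  apply: ler_sum => x _; case: (x \in _) => //.
  by apply: prodr_ge0 => i _.
rewrite -(bigA_distr_bigA (fun (i : 'I_n) (k : 'I_q) => wt t u k)) /=.
by rewrite prodr_const card_ord.
Qed.


Local Open Scope ring_scope.

Lemma geo_eventually (b a : R) : 0 < b -> b < a ->
  exists K : nat, forall k, leq K k -> b ^+ k.+1 < a ^+ k.
Proof.
move=> b0 ba.
have a0 : 0 < a by apply: lt_trans ba.
have hx : Rlt (Rabs (Rdiv b a)) 1.
  rewrite Rabs_pos_eq; last by apply/RleP; rewrite divr_ge0 // ltW.
  by apply/RltP; rewrite ltr_pdivrMr // mul1r.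
have hy : 0 < b^-1 by rewrite invr_gt0.
have hy' : Rlt 0 (b^-1) by apply/RltP.
have [K HK] := pow_lt_1_zero _ hx _ hy'.
exists K => k hk.
have := HK k (ssrnat.leP hk).
rewrite Rabs_pos_eq; last by apply: pow_le; apply/RleP; rewrite divr_ge0 // ltW.
rewrite RpowE => /RltP h.
rewrite exprS.
have h2 : b ^+ k < b^-1 * a ^+ k by rewrite -ltr_pdivrMr ?exprn_gt0 // -expr_div_n.
by rewrite -(ltr_pM2l b0) mulrA mulfV ?mul1r // gt_eqF in h2.
Qed.

Lemma core q m (rho rho2 a : R) : leq 1 m -> 0 < rho -> rho < rho2 -> 1 <= rho2 ->
  rho2 ^+ m < a ->
  (forall n, #|AB_set n q|%:R <= rho ^+ n) ->
  (forall k r, a ^+ k <= #|A_set (addn (muln k m) r) q|%:R) ->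
  exists c : R, 1 < c /\ exists N : nat, forall n : nat, leq N n ->
    #|AB_set n q|%:R / #|A_set n q|%:R < (c ^+ n)^-1.
Proof.
move=> m0 r0 rr2 r21 ha hAB hA.
have r20 : 0 < rho2 by apply: lt_trans rr2.
have b0 : 0 < rho2 ^+ m by rewrite exprn_gt0.
have [K HK] := geo_eventually b0 ha.
exists (rho2 / rho); split; first by rewrite ltr_pdivlMr // mul1r.
exists (muln K m) => n hn.
set k := (divn n m); set r := (modn n m).
have hn' : n = (addn (muln k m) r) by rewrite /k /r -divn_eq.
have hk : leq K k by rewrite /k leq_divRL.
have hAn := hA k r; rewrite -hn' in hAn.
have hbig := HK k hk.
have hle : rho2 ^+ n <= (rho2 ^+ m) ^+ k.+1.
  rewrite -exprM; apply: ler_weXn2l => //.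
  by rewrite hn' mulnC mulnS addnC leq_add2r ltnW // /r ltn_mod m0.
have hlt : rho2 ^+ n < #|A_set n q|%:R.
  by apply: le_lt_trans hle (lt_le_trans hbig hAn).
have Apos : 0 < #|A_set n q|%:R :> R by apply: le_lt_trans hlt; rewrite exprn_ge0 // ltW.
rewrite expr_div_n invf_div.
apply: (@le_lt_trans _ _ (rho ^+ n / #|A_set n q|%:R)).
  by rewrite ler_pM2r ?invr_gt0.
rewrite ltr_pM2l ?exprn_gt0 //.
rewrite ltf_pV2 // posrE ?exprn_gt0 //.
Qed.


Local Open Scope ring_scope.

Lemma geom (T : R) q : (1 - T) * \sum_(k < q) T ^+ k = 1 - T ^+ q.
Proof.
elim: q => [|q IH]; first by rewrite big_ord0 mulr0 expr0 subrr.
by rewrite big_ord_recr /= mulrDr IH exprS mulrBl mul1r addrA subrK.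
Qed.

Lemma wtE t u k : wt t u k = (if k == O then u^+25 - 1 else 0) + (t^+25)^+k.
Proof.
rewrite /wt -exprM; case: k => [|k] /=.
  by rewrite muln1 muln0 expr0 mulr1 subrK.
by rewrite muln0 expr0 mul1r add0r.
Qed.

Lemma sum_wt t u q : (leq 1 q) ->
  \sum_(k < q) wt t u k = u ^+ 25 - 1 + \sum_(k < q) (t ^+ 25) ^+ k.
Proof.
move=> q0; under eq_bigr => k _ do rewrite wtE. rewrite big_split /=; congr (_ + _).
case: q q0 => // q _; rewrite big_ord_recl /= big1 ?addr0 // => i _.
Qed.

Lemma AB_bound q (t u rho : R) : 0 < t -> t < 1 -> 1 <= u -> (leq 1 q) ->
  (u ^+ 25 - 1) * (1 - t ^+ 25) + (1 - (t ^+ 25) ^+ q) <=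
     rho * (t ^+ 33 * u ^+ 14) * (1 - t ^+ 25) ->
  forall n, #|AB_set n q|%:R <= rho ^+ n.
Proof.
move=> t0 t1 u1 q0 HW n.
set T := t ^+ 25; set D := t ^+ 33 * u ^+ 14.
have u0 : 0 < u by apply: lt_le_trans u1.
have D0 : 0 < D by rewrite mulr_gt0 ?exprn_gt0.
have T1 : T < 1 by rewrite /T exprn_ilt1 // ltW.
have T0 : 0 <= T by rewrite /T exprn_ge0 // ltW.
have W0 : 0 <= \sum_(k < q) wt t u k.
  by apply: sumr_ge0 => k _; rewrite /wt mulr_ge0 // exprn_ge0 // ltW.
have HW' : \sum_(k < q) wt t u k <= rho * D.
  rewrite -(ler_pM2r (_ : 0 < 1 - T)) ?subr_gt0 //.
  by rewrite sum_wt // mulrDl [X in _ + X]mulrC geom.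
have rD0 : 0 <= rho * D by apply: le_trans HW'.
have := chernoff n q (ltW t0) (ltW t1) u1.
rewrite -/D => h.
have h2 : #|AB_set n q|%:R * D ^+ n <= rho ^+ n * D ^+ n.
  apply: le_trans h _; rewrite -exprMn; apply: lerXn2r; rewrite ?nnegrE //.
by rewrite ler_pM2r ?exprn_gt0 in h2.
Qed.

Lemma A_lower (q Q m : nat) : (leq 1 Q) -> (leq Q q) ->
  forall k r, (#|A_set m Q|%:R : R) ^+ k <= #|A_set (k * m + r) q|%:R.
Proof.
move=> Q0 Qq k r; rewrite -natrX ler_nat.
apply: leq_trans (A_blocks m k r Q0) _.
rewrite !A_setE; exact: Aset_widen.
Qed.


Fixpoint qpow (x : Q) (n : nat) : Q :=
  match n with O => 1%Q | S n' => (x * qpow x n')%Q end.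
Definition qltb (x y : Q) : bool := negb (Qle_bool y x).
Definition Zval (m Qb : nat) : Z := nth 0%Z (Zlev Qb (divn (muln 132 m) 100) m) (divn (muln 132 m) 100).
Definition chkW (geo : bool) (Qb : nat) (t u rho : Q) : bool :=
  let T := qpow t 25 in let D := (qpow t 33 * qpow u 14)%Q in
  Qle_bool ((qpow u 25 - 1) * (1 - T) + (if geo then 1 else 1 - qpow T Qb))%Q
           (rho * D * (1 - T))%Q.
Definition checks (geo : bool) (Qb m : nat) (t u rho rho2 : Q) : bool :=
  [&& qltb 0 t, qltb t 1, Qle_bool 1 u, qltb 0 rho & [&& qltb rho rho2, Qle_bool 1 rho2,
      chkW geo Qb t u rho & qltb (qpow rho2 m) (inject_Z (Zval m Qb))]].

Local Open Scope ring_scope.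

Lemma Q2R_qpow x n : Q2R (qpow x n) = Q2R x ^+ n.
Proof.
elim: n => [|n IH] /=; first by rewrite RMicromega.Q2R_1.
by rewrite Q2R_mult IH exprS.
Qed.

Lemma Q2R_injZ z : Q2R (inject_Z z) = IZR z.
Proof. by rewrite /Q2R /= Rinv_1 Rmult_1_r. Qed.

Lemma qltbP x y : qltb x y -> Q2R x < Q2R y.
Proof.
rewrite /qltb => /negP h; apply/RltP; apply: Qlt_Rlt; apply: Qnot_le_lt => h'.
by apply: h; apply/Qle_bool_iff.
Qed.

Lemma qlebP x y : Qle_bool x y -> Q2R x <= Q2R y.
Proof. by move=> h; apply/RleP; apply: RMicromega.Qle_true. Qed.

Lemma Zval_ok m Qb : IZR (Zval m Qb) = #|A_set m Qb|%:R.
Proof. by rewrite /Zval -A_set_Z -INR_IZR_INZ INRE. Qed.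

Lemma chkW_R geo Qb t u rho : chkW geo Qb t u rho ->
  (Q2R u ^+ 25 - 1) * (1 - Q2R t ^+ 25) + (if geo then 1 else 1 - (Q2R t ^+ 25) ^+ Qb)
  <= Q2R rho * (Q2R t ^+ 33 * Q2R u ^+ 14) * (1 - Q2R t ^+ 25).
Proof.
rewrite /chkW => /qlebP.
rewrite (Q2R_plus ((qpow u 25 - 1) * (1 - qpow t 25))%Q) (Q2R_mult (qpow u 25 - 1)%Q).
rewrite (Q2R_minus (qpow u 25)) (Q2R_minus 1 (qpow t 25)).
rewrite (Q2R_mult (rho * (qpow t 33 * qpow u 14))%Q) (Q2R_mult rho) (Q2R_mult (qpow t 33)).
case: geo; last rewrite (Q2R_minus 1 (qpow (qpow t 25) Qb)).
all: by rewrite (Q2R_minus 1 (qpow t 25)) !Q2R_qpow !RMicromega.Q2R_1.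
Qed.

Lemma case_gen (geo : bool) (q Qb m : nat) (t u rho rho2 : Q) :
  leq 1 Qb -> leq Qb q -> (geo = false -> Qb = q) -> leq 1 m ->
  checks geo Qb m t u rho rho2 ->
  exists c : R, 1 < c /\ exists N : nat, forall n : nat, leq N n ->
    #|AB_set n q|%:R / #|A_set n q|%:R < (c ^+ n)^-1.
Proof.
move=> Q1 Qq hgeo m1 /and5P [ht0 ht1 hu1 hr0 /and4P [hrr hr21 hW ha]].
have q1 : leq 1 q by apply: leq_trans Qq.
move/qltbP: ht0; move/qltbP: ht1; move/qlebP: hu1; move/qltbP: hr0; move/qltbP: hrr;
move/qlebP: hr21; move/qltbP: ha.
rewrite Q2R_qpow Q2R_injZ Zval_ok RMicromega.Q2R_1 RMicromega.Q2R_0.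
move=> ha hr21 hrr hr0 hu1 ht1 ht0.
apply: (core m1 hr0 hrr hr21 ha); last first.
  exact: A_lower.
apply: (AB_bound ht0 ht1 hu1 q1).
move: (chkW_R hW); clear hW.
case: geo hgeo => hgeo.
- move=> h; apply: le_trans h; rewrite lerD2l lerBlDr lerDl exprn_ge0 //.
  by rewrite exprn_ge0 // ltW.
- by rewrite -(hgeo erefl) => h.
Qed.

Local Open Scope ring_scope.

Lemma conv q :
  (exists c : R, 1 < c /\ exists N : nat, forall n : nat, leq N n ->
    #|AB_set n q|%:R / #|A_set n q|%:R < (c ^+ n)^-1) ->
  exists c : R, Rlt 1 c /\ exists N : nat, forall n : nat, leq N n ->
    Rlt (Rdiv (INR #|AB_set n q|) (INR #|A_set n q|)) (Rinv (pow c n)).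
Proof.
move=> [c [c1 [N HN]]]; exists c; split; first by apply/RltP.
exists N => n hn; apply/RltP; rewrite !INRE RdivE RinvE RpowE; exact: HN.
Qed.

Lemma c2 : exists c : R, Rlt 1 c /\ exists N : nat, forall n : nat, leq N n ->
    Rlt (Rdiv (INR #|AB_set n 2|) (INR #|A_set n 2|)) (Rinv (pow c n)).
Proof.
apply: conv; apply: (@case_gen false 2 2 1 (99999#100000)%Q (104#103)%Q (1987#1000)%Q (199#100)%Q);
  [by []|by []|by []|by []|vm_compute; reflexivity].
Qed.

Definition GoalQ (q : nat) := exists c : R, Rlt 1 c /\ exists N : nat, forall n : nat, leq N n ->
    Rlt (Rdiv (INR #|AB_set n q|) (INR #|A_set n q|)) (Rinv (pow c n)).


Lemma allq q : leq 2 q -> GoalQ q.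
Proof.
case: q => [|[|[|[|[|[|[|[|q]]]]]]]] // _.
- exact: c2.
- apply: conv; apply: (@case_gen false 3 3 10 (199#200)%Q (34#33)%Q (2929#1000)%Q (2971#1000)%Q); [by []|by []|by []|by []|vm_compute; reflexivity].
- apply: conv; apply: (@case_gen false 4 4 10 (199#200)%Q (23#22)%Q (3411#1000)%Q (3587#1000)%Q); [by []|by []|by []|by []|vm_compute; reflexivity].
- apply: conv; apply: (@case_gen false 5 5 20 (199#200)%Q (19#18)%Q (1887#500)%Q (508#125)%Q); [by []|by []|by []|by []|vm_compute; reflexivity].
- apply: conv; apply: (@case_gen false 6 6 25 (199#200)%Q (17#16)%Q (203#50)%Q (2157#500)%Q); [by []|by []|by []|by []|vm_compute; reflexivity].
- apply: conv; apply: (@case_gen false 7 7 50 (136#137)%Q (18#17)%Q (2143#500)%Q (909#200)%Q); [by []|by []|by []|by []|vm_compute; reflexivity].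
- apply: conv; apply: (@case_gen true q.+4.+4 8 100 (61#62)%Q (27#26)%Q (4601#1000)%Q (586#125)%Q); [by []|by []|by []|by []|vm_compute; reflexivity].
Qed.

Open Scope R_scope.

Theorem mainTheorem4 :
  forall q : nat, (2 <= q)%nat ->
  exists c : R, 1 < c /\
    exists N : nat, forall n : nat, (N <= n)%nat ->
      INR #|AB_set n q| / INR #|A_set n q| < / (c ^ n).
Proof. move=> q hq; exact (@allq q hq). Qed.
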